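(* Let $\mathcal H$ be a Hopf algebra, $\mathcal A\subset\mathcal H$ a left coideal subalgebra and $\mu\in\mathcal A'$ a non-zero multiplicative functional on $\mathcal A$. If $\dim L^{\mathcal A}_\mu>0$ or $\dim R^{\mathcal A}_\mu>0$, then $\dim\mathcal A<\infty$.
   Context: $k$ is a field; $\mathcal H$ is a Hopf algebra over $k$ with comultiplication $\Delta$, counit $\varepsilon$ and invertible antipode $S$. A left coideal subalgebra is a subalgebra $\mathcal A\ni 1$ with $\Delta(\mathcal A)\subset\mathcal H\otimes\mathcal A$. A multiplicative functional is a linear $\mu:\mathcal A\to k$ with $\mu(ab)=\mu(a)\mu(b)$. $L^{\mathcal A}_\mu=\{\Lambda\in\mathcal A: a\Lambda=\mu(a)\Lambda\ \forall a\in\mathcal A\}$ and $R^{\mathcal A}_\mu=\{\Lambda\in\mathcal A:\Lambda a=\mu(a)\Lambda\ \forall a\in\mathcal A\}$. *)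

(* Defs.v *)
From HB Require Import structures.
From mathcomp Require Import all_boot all_order all_algebra.
Set Implicit Arguments. Unset Strict Implicit. Unset Printing Implicit Defensive.
Import GRing.Theory.
Local Open Scope ring_scope.

(* Elements of H (x) H, resp. H (x) H (x) H, are represented by finite lists of
   pure tensors.  Two such representatives denote the same tensor iff they agree
   under every product of linear functionals (over a field the maps f (x) g
   separate points of the algebraic tensor product). *)

Section Hopf.
Variables (k : fieldType) (H : algType k).

Definition lin_fun (f : H -> k) : Prop :=
  forall (c : k) (x y : H), f (c *: x + y) = c * f x + f y.

Definition lin_map (f : H -> H) : Prop :=
  forall (c : k) (x y : H), f (c *: x + y) = c *: f x + f y.

Definition teq2 (s t : seq (H * H)) : Prop :=
  forall f g : H -> k, lin_fun f -> lin_fun g ->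
    \sum_(p <- s) f p.1 * g p.2 = \sum_(p <- t) f p.1 * g p.2.

Definition teq3 (s t : seq (H * H * H)) : Prop :=
  forall f g h : H -> k, lin_fun f -> lin_fun g -> lin_fun h ->
    \sum_(p <- s) f p.1.1 * g p.1.2 * h p.2 =
    \sum_(p <- t) f p.1.1 * g p.1.2 * h p.2.

Record hopf_struct := HopfStruct {
  cop : H -> seq (H * H);
  eps : H -> k;
  antipode : H -> H;
  cop_lin : forall (c : k) (x y : H),
    teq2 (cop (c *: x + y)) ([seq (c *: p.1, p.2) | p <- cop x] ++ cop y);
  cop_mul : forall x y : H,
    teq2 (cop (x * y)) [seq (p.1 * q.1, p.2 * q.2) | p <- cop x, q <- cop y];
  cop_one : teq2 (cop 1) [:: (1, 1)];
  coassoc : forall x : H,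
    teq3 [seq (q.1, q.2, p.2) | p <- cop x, q <- cop p.1]
         [seq (p.1, q.1, q.2) | p <- cop x, q <- cop p.2];
  eps_lin : lin_fun eps;
  eps_mul : forall x y : H, eps (x * y) = eps x * eps y;
  eps_one : eps 1 = 1;
  counit_l : forall x : H, \sum_(p <- cop x) eps p.1 *: p.2 = x;
  counit_r : forall x : H, \sum_(p <- cop x) eps p.2 *: p.1 = x;
  antipode_lin : lin_map antipode;
  antipode_l : forall x : H, \sum_(p <- cop x) antipode p.1 * p.2 = eps x *: 1;
  antipode_r : forall x : H, \sum_(p <- cop x) p.1 * antipode p.2 = eps x *: 1;
  antipode_inv : exists S' : H -> H, cancel antipode S' /\ cancel S' antipode
}.

Variable HS : hopf_struct.

Definition left_coideal_subalgebra (A : H -> Prop) : Prop :=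
  [/\ A 0, A 1,
      (forall (c : k) x y, A x -> A y -> A (c *: x + y)),
      (forall x y, A x -> A y -> A (x * y)) &
      (forall a, A a -> exists s : seq (H * H),
          (forall p, p \in s -> A p.2) /\ teq2 (cop HS a) s)].

End Hopf.

Section Sub.
Variables (k : fieldType) (H : algType k).

(* mu : A -> k is linear and multiplicative (mu is given on all of H, only
   its values on A matter). *)
Definition mult_functional (A : H -> Prop) (mu : H -> k) : Prop :=
  (forall (c : k) x y, A x -> A y -> mu (c *: x + y) = c * mu x + mu y) /\
  (forall x y, A x -> A y -> mu (x * y) = mu x * mu y).

Definition nonzero_on (A : H -> Prop) (mu : H -> k) : Prop :=
  exists a, A a /\ mu a <> 0.

Definition L_mu (A : H -> Prop) (mu : H -> k) (L : H) : Prop :=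
  A L /\ forall a, A a -> a * L = mu a *: L.

Definition R_mu (A : H -> Prop) (mu : H -> k) (L : H) : Prop :=
  A L /\ forall a, A a -> L * a = mu a *: L.

Definition pos_dim (S : H -> Prop) : Prop := exists x, S x /\ x <> 0.

Definition fin_dim (A : H -> Prop) : Prop :=
  exists s : seq H, (forall x, x \in s -> A x) /\
    forall a, A a -> exists c : 'I_(size s) -> k,
      a = \sum_(i < size s) c i *: s`_i.
End Sub.

(* Main.v *)
Require Import Defs.
From mathcomp Require Import all_boot all_order all_algebra.
From mathcomp Require Import boolp classical_sets.
From mathcomp Require Import zify.
Set Implicit Arguments. Unset Strict Implicit. Unset Printing Implicit Defensive.
Import GRing.Theory.
Local Open Scope ring_scope.

Section LinAlg.
Variables (k : fieldType) (H : algType k).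
Notation lin := (@lin_fun k H).

Lemma lin0 f : lin f -> f 0 = 0.
Proof.
move=> lf; have := lf 1 0 0; rewrite scale1r addr0 mul1r => /esym/eqP.
by rewrite -subr_eq0 addrK => /eqP.
Qed.

Lemma linD f x y : lin f -> f (x + y) = f x + f y.
Proof. by move=> lf; have := lf 1 x y; rewrite scale1r mul1r. Qed.

Lemma linZ f c x : lin f -> f (c *: x) = c * f x.
Proof. by move=> lf; rewrite -[c *: x]addr0 lf (lin0 lf) addr0. Qed.

Lemma linN f x : lin f -> f (- x) = - f x.
Proof. by move=> lf; rewrite -scaleN1r linZ // mulN1r. Qed.

Lemma linB f x y : lin f -> f (x - y) = f x - f y.
Proof. by move=> lf; rewrite linD // linN. Qed.

Lemma lin_sum f I (r : seq I) (P : pred I) (F : I -> H) : lin f ->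
  f (\sum_(i <- r | P i) F i) = \sum_(i <- r | P i) f (F i).
Proof. by move=> lf; apply: (big_morph f (fun x y => linD x y lf) (lin0 lf)). Qed.

Lemma ZL (K : H -> Prop) (x : H) : K 0 ->
  (forall c u v, K u -> K v -> K (c *: u + v)) -> ~ K x ->
  exists f, lin f /\ (forall z, K z -> f z = 0) /\ f x = 1.
Proof.
move=> K0 Kc Kx.
pose P := fun W : set H =>
  (forall c u v, (K u \/ W u) -> (K v \/ W v) -> (K (c*:u+v) \/ W (c*:u+v)))
  /\ ~ W x.
have [M [[Mc Mx] Mmax]] : exists M, P M /\ forall B, (M `<` B)%classic -> ~ P B.
  apply: Zorn_bigcup => F FP Ftot; split.
    move=> c u v [Ku|[X FX Xu]] [Kv|[Y FY Yv]].
    - by left; apply: Kc.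
    - have [+ _] := FP Y FY => /(_ c u v (or_introl Ku) (or_intror Yv)).
      by case=> [?|?]; [left|right; exists Y].
    - have [+ _] := FP X FX => /(_ c u v (or_intror Xu) (or_introl Kv)).
      by case=> [?|?]; [left|right; exists X].
    - have [XY|YX] := Ftot X Y FX FY.
      + have [+ _] := FP Y FY => /(_ c u v (or_intror (XY _ Xu)) (or_intror Yv)).
        by case=> [?|?]; [left|right; exists Y].
      + have [+ _] := FP X FX => /(_ c u v (or_intror Xu) (or_intror (YX _ Yv))).
        by case=> [?|?]; [left|right; exists X].
  by move=> [X FX Xx]; have [_] := FP X FX; apply.
pose W z := K z \/ M z.
have W0 : W 0 by left.
have Wc : forall c u v, W u -> W v -> W (c *: u + v) by move=> c u v; apply: Mc.
have WN : forall u, W u -> W (- u).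
  by move=> u Wu; rewrite -[- u]addr0 -scaleN1r; apply: Wc.
have Wx : ~ W x by case.
have WB : forall u v, W u -> W v -> W (u - v).
  by move=> u v Wu Wv; rewrite -[u]scale1r; apply: Wc => //; apply: WN.
have dec : forall y, exists c, exists2 w, W w & y = w + c *: x.
  move=> y; have [Wy|Wy] := pselect (W y).
    by exists 0; exists y => //; rewrite scale0r addr0.
  pose B := fun z => exists c, exists2 w, W w & z = w + c *: y.
  have PB : ~ P B.
    apply: Mmax; split.
      by move=> z Mz; exists 0; exists z; [right|rewrite scale0r addr0].
    move=> /(_ y); have By : B y by exists 1; exists 0 => //; rewrite add0r scale1r.
    by move=> /(_ By) My; apply: Wy; right.
  have : ~ ~ B x.
    move=> nBx; apply: PB; split => // c u v Bu Bv; right.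
    have {}Bu : B u by case: Bu => // Ku; exists 0; exists u; [left|rewrite scale0r addr0].
    have {}Bv : B v by case: Bv => // Kv; exists 0; exists v; [left|rewrite scale0r addr0].
    case: Bu => a [w Ww ->]; case: Bv => b [w' Ww' ->].
    exists (c * a + b); exists (c *: w + w'); first exact: Wc.
    by rewrite scalerDr scalerDl scalerA; rewrite addrACA.
  move=> /(contrapT) [c [w Ww xE]].
  have c0 : c != 0.
    apply/negP => /eqP c0; apply: Wx; move: xE; rewrite c0 scale0r addr0 => ->.
    exact: Ww.
  exists c^-1; exists (- (c^-1 *: w)).
    by rewrite -scaleNr -[_ *: w]addr0; apply: Wc.
  by rewrite xE scalerDr scalerA mulVf // scale1r addrA addNr add0r.
have uniq : forall c c' w w', W w -> W w' -> w + c *: x = w' + c' *: x -> c = c'.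
  move=> c c' w w' Ww Ww' E; apply/eqP; rewrite -subr_eq0; apply: contrapT => /negP cc.
  apply: Wx.
  have : (c - c') *: x = w' - w.
    rewrite scalerBl.
    have : (w + c *: x) - w - c' *: x = (w' + c' *: x) - w - c' *: x by rewrite E.
    by rewrite [w + _]addrC addrK => ->; rewrite addrAC addrK.
  move=> /(congr1 (fun z => (c - c')^-1 *: z)); rewrite scalerA mulVf // scale1r => ->.
  by rewrite -[_ *: _]addr0; apply: Wc => //; apply: WB.
have [f fP] := choice dec.
exists f; split; last split.
- move=> c u v.
  have [w1 Ww1 E1] := fP u; have [w2 Ww2 E2] := fP v.
  have [w3 Ww3 E3] := fP (c *: u + v).
  apply: (uniq _ _ w3 (c *: w1 + w2)) => //; first exact: Wc.
  rewrite -E3 {1}E1 {1}E2 scalerDr scalerDl scalerA.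
  by rewrite addrACA.
- move=> z Kz; have [w Ww E] := fP z.
  symmetry; apply: (uniq _ _ z w); [by left|by []|].
  by rewrite scale0r addr0 -E.
- have [w Ww E] := fP x; symmetry; apply: (uniq _ _ 0 w) => //.
  by rewrite add0r scale1r -E.
Qed.

Lemma sep x : x <> 0 -> exists f, lin f /\ f x = 1.
Proof.
move=> x0; have [|||f [lf [_ fx]]] := @ZL (fun z => z = 0) x => //.
  by move=> c u v -> ->; rewrite scaler0 addr0.
by exists f.
Qed.

Lemma sep_eq x y : (forall f, lin f -> f x = f y) -> x = y.
Proof.
move=> E; apply/eqP; rewrite -subr_eq0; apply/eqP; apply: contrapT.
move=> /sep [f [lf fx]].
by move: fx; rewrite linB // E // subrr => /eqP; rewrite eq_sym oner_eq0.
Qed.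



Lemma lin_zero : lin (fun _ => 0).
Proof. by move=> c x y; rewrite mulr0 addr0. Qed.

Lemma sum_delta n (F : nat -> k) i : (i < n)%N ->
  \sum_(j < n) F j * (nat_of_ord j == i)%:R = F i.
Proof.
move=> lt; rewrite (bigD1 (Ordinal lt)) //= eqxx mulr1 big1 ?addr0 // => j.
move=> nj; suff -> : (nat_of_ord j == i) = false by rewrite mulr0.
by apply/negbTE; apply: contra nj => /eqP ji; apply/eqP; apply: val_inj.
Qed.

Lemma FDB (l : seq H) : exists n (e : nat -> H) (phi : nat -> H -> k),
  [/\ (forall j, lin (phi j)),
      (forall i j, (i < n)%N -> (j < n)%N -> phi j (e i) = (i == j)%:R) &
      (forall x, x \in l -> x = \sum_(j < n) phi j x *: e j)].
Proof.
elim: l => [|x l [n [e [phi [lphi dual span]]]]].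
  by exists 0%N, (fun _ => 0), (fun _ _ => 0); split => // _; apply: lin_zero.
pose r := x - \sum_(j < n) phi j x *: e j.
have [r0|rn0] := pselect (r = 0).
  exists n, e, phi; split => // z; rewrite inE => /orP[/eqP ->|]; last exact: span.
  by apply/eqP; rewrite -subr_eq0; apply/eqP.
pose K z := exists c : nat -> k, z = \sum_(j < n) c j *: e j.
have phiK : forall i (c : nat -> k), (i < n)%N -> phi i (\sum_(j < n) c j *: e j) = c i.
  move=> i c lt; rewrite lin_sum //; under eq_bigr do rewrite linZ // dual //.
  exact: sum_delta.
have phir : forall i, (i < n)%N -> phi i r = 0.
  move=> i lt; rewrite /r linB // (phiK i (phi^~ x)) // subrr //.
have [||//|psi [lpsi [psiK psir]]] := @ZL K r.
- by exists (fun _ => 0); rewrite big1 // => j _; rewrite scale0r.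
- move=> c u v [a ->] [b ->]; exists (fun j => c * a j + b j).
  rewrite scaler_sumr -big_split /=; apply: eq_bigr => j _.
  by rewrite scalerDl scalerA.
- move=> [c rE]; apply: rn0; rewrite rE big1 // => j _.
  by rewrite -(phiK j c) // -rE phir // scale0r.
exists n.+1, (fun j => if j == n then r else e j),
  (fun j => if j == n then psi else phi j); split.
- by move=> j; case: (j == n).
- move=> i j; rewrite ltnS leq_eqVlt => /orP[/eqP ->|ilt]; rewrite ltnS leq_eqVlt => /orP[/eqP ->|jlt].
  + by rewrite eqxx.
  + by rewrite (ltn_eqF jlt) eqxx phir // (gtn_eqF jlt).
  + rewrite (ltn_eqF ilt) eqxx psiK //.
    exists (fun j => (j == i)%:R); symmetry.
    rewrite (bigD1 (Ordinal ilt)) //= eqxx scale1r big1 ?addr0 // => j' nj.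
    suff -> : (nat_of_ord j' == i) = false by rewrite scale0r.
    by apply/negbTE; apply: contra nj => /eqP ji; apply/eqP; apply: val_inj.
  + by rewrite (ltn_eqF ilt) (ltn_eqF jlt) dual.
- move=> z; rewrite big_ord_recr /= eqxx.
  under eq_bigr => j _ do rewrite /= (ltn_eqF (ltn_ord j)).
  rewrite inE => /orP[/eqP ->|zl].
    have -> : psi x = 1.
      by rewrite -[x](subrK (\sum_(j < n) phi j x *: e j)) linD // psir psiK ?addr0 //; exists (phi^~ x).
    by rewrite scale1r addrC subrK.
  rewrite psiK ?scale0r ?addr0; first exact: span.
  by exists (phi^~ z); apply: span.
Qed.

Definition bil (B : H -> H -> k) := (forall z, lin (B ^~ z)) /\ (forall u, lin (B u)).
Definition tril (T : H -> H -> H -> k) := [/\ (forall v w, lin (fun u => T u v w)),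
  (forall u w, lin (fun v => T u v w)) & (forall u v, lin (T u v))].

Lemma slice2 s t f : teq2 s t -> lin f ->
  \sum_(p <- s) f p.1 *: p.2 = \sum_(p <- t) f p.1 *: p.2.
Proof.
move=> st lf; apply: sep_eq => g lg; rewrite !lin_sum //.
under eq_bigr do rewrite linZ //.
under [RHS]eq_bigr do rewrite linZ //.
exact: st.
Qed.

Lemma expand2 n (e : nat -> H) (phi : nat -> H -> k) s B : bil B ->
  (forall j, lin (phi j)) ->
  (forall p, p \in s -> p.1 = \sum_(j < n) phi j p.1 *: e j) ->
  \sum_(p <- s) B p.1 p.2 = \sum_(j < n) B (e j) (\sum_(p <- s) phi j p.1 *: p.2).
Proof.
move=> [B1 B2] lphi sp.
rewrite [RHS](eq_bigr (fun j => \sum_(p <- s) phi (nat_of_ord j) p.1 * B (e j) p.2)); last first.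
  by move=> j _; rewrite lin_sum //; apply: eq_bigr => p _; rewrite linZ.
rewrite (exchange_big_dep xpredT) //=; rewrite big_seq_cond [RHS]big_seq_cond.
apply: eq_bigr => p /andP[ps _]; rewrite {1}(sp p ps) (lin_sum _ _ _ (B1 _)).
by apply: eq_bigr => j _; rewrite (linZ _ _ (B1 _)).
Qed.

Lemma BIL2 s t B : teq2 s t -> bil B ->
  \sum_(p <- s) B p.1 p.2 = \sum_(p <- t) B p.1 p.2.
Proof.
move=> st bB; have [n [e [phi [lphi _ sp]]]] := FDB (map fst (s ++ t)).
rewrite (expand2 (n:=n) (e:=e) (phi:=phi) (s:=s) bB lphi); last first.
  by move=> p ps; apply: sp; apply: map_f; rewrite mem_cat ps.
rewrite (expand2 (n:=n) (e:=e) (phi:=phi) (s:=t) bB lphi); last first.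
  by move=> p ps; apply: sp; apply: map_f; rewrite mem_cat ps orbT.
by apply: eq_bigr => j _; rewrite (slice2 st (lphi j)).
Qed.

Lemma BIL3 s t T : teq3 s t -> tril T ->
  \sum_(p <- s) T p.1.1 p.1.2 p.2 = \sum_(p <- t) T p.1.1 p.1.2 p.2.
Proof.
move=> st [T1 T2 T3].
have [n [e [phi [lphi _ sp]]]] := FDB (map (fun p => p.1.1) (s ++ t)).
have ex : forall r, (forall p, p \in r -> p.1.1 = \sum_(j < n) phi j p.1.1 *: e j) ->
   \sum_(p <- r) T p.1.1 p.1.2 p.2 =
   \sum_(j < n) \sum_(q <- [seq (phi j p.1.1 *: p.1.2, p.2) | p <- r]) T (e j) q.1 q.2.
  move=> r sr.
  under [RHS]eq_bigr do rewrite big_map.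
  rewrite [RHS](exchange_big_dep xpredT) //=.
  rewrite big_seq_cond [RHS]big_seq_cond; apply: eq_bigr => p /andP[pr _].
  rewrite {1}(sr p pr) (lin_sum _ _ _ (T1 _ _)); apply: eq_bigr => j _.
  by rewrite (linZ _ _ (T1 _ _)) (linZ _ _ (T2 _ _)).
rewrite !ex; last 2 first.
- by move=> p ps; apply: sp; apply: (map_f (fun p => p.1.1)); rewrite mem_cat ps orbT.
- by move=> p ps; apply: sp; apply: (map_f (fun p => p.1.1)); rewrite mem_cat ps.
apply: eq_bigr => j _; apply: BIL2; last by split; [move=> z; apply: T2|move=> u; apply: T3].
move=> f g lf lg; rewrite !big_map /=.
under eq_bigr do rewrite linZ //.
under [RHS]eq_bigr do rewrite linZ //.
exact: (st _ _ _ (lphi j) lf lg).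
Qed.

End LinAlg.

Lemma span_fin (k : fieldType) (V : vectType k) (C : V -> Prop) : C 0 ->
  (forall c u v, C u -> C v -> C (c *: u + v)) ->
  exists s : seq V, (forall x, x \in s -> C x) /\ (forall x, C x -> x \in <<s>>%VS).
Proof.
move=> C0 Cc.
suff: forall d (s : seq V), (forall x, x \in s -> C x) ->
   (\dim {:V} - \dim <<s>> <= d)%N ->
   exists s : seq V, (forall x, x \in s -> C x) /\ (forall x, C x -> x \in <<s>>%VS).
  by move=> /(_ _ [::]); apply => //.
elim=> [|d IH] s Cs.
  rewrite leqn0 subn_eq0 => le; exists s; split => // x _.
  have : (<<s>> <= fullv)%VS by apply: subvf.
  move/dimv_leqif_eq/geq_leqif; rewrite le => /esym/eqP ->.
  exact: memvf.
move=> le.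
have [all|] := pselect (forall x, C x -> x \in <<s>>%VS).
  by exists s.
move=> /existsNP [x /not_implyP [Cx xn]].
apply: (IH (x :: s)).
  by move=> z; rewrite inE => /orP[/eqP ->|]; [|apply: Cs].
have sub : (<<s>> <= <<x :: s>>)%VS by apply: sub_span => z zs; rewrite inE zs orbT.
have lt : (\dim <<s>> < \dim <<x :: s>>)%N.
  rewrite (ltn_leqif (dimv_leqif_eq sub)); apply/negP => /eqP E.
  by apply: xn; rewrite E; apply: memv_span; rewrite inE eqxx.
have : (\dim <<x :: s>> <= \dim {:V})%N by apply: dimvS; apply: subvf.
move: le lt; move: (\dim <<s>>) (\dim <<x :: s>>) (\dim {:V}) => a b c.
move=> h1 h2 h3; lia.
Qed.

Lemma coord_ex (k : fieldType) (V : vectType k) (s : seq V) x : x \in <<s>>%VS ->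
  exists c : 'I_(size s) -> k, x = \sum_(i < size s) c i *: s`_i.
Proof.
move=> xs; exists (fun i => coord (in_tuple s) i x).
by rewrite {1}(@coord_span _ _ _ (in_tuple s) x xs).
Qed.

Lemma FIN (k : fieldType) (H : algType k) (A : H -> Prop) m n (ys : nat -> H)
  (Psi : nat -> H -> H) :
  A 0 -> (forall c x y, A x -> A y -> A (c *: x + y)) ->
  (forall j c x y, Psi j (c *: x + y) = c *: Psi j x + Psi j y) ->
  (forall a, A a -> forall j, (j < m)%N ->
     exists c : nat -> k, Psi j a = \sum_(i < n) c i *: ys i) ->
  (forall a, A a -> (forall j, (j < m)%N -> Psi j a = 0) -> a = 0) ->
  fin_dim A.
Proof.
move=> A0 Ac Pl Pspan Pinj.
have P0 j : Psi j 0 = 0.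
  have := Pl j 1 0 0; rewrite !scale1r addr0 => /esym/eqP.
  by rewrite -subr_eq0 addrK => /eqP.
have PD j x y : Psi j (x + y) = Psi j x + Psi j y.
  by have := Pl j 1 x y; rewrite !scale1r.
have PZ j c x : Psi j (c *: x) = c *: Psi j x.
  by have := Pl j c x 0; rewrite !addr0 P0 addr0.
have Psum j N (d : 'I_N -> k) (v : 'I_N -> H) :
    Psi j (\sum_(i < N) d i *: v i) = \sum_(i < N) d i *: Psi j (v i).
  rewrite (big_morph (Psi j) (PD j) (P0 j)); apply: eq_bigr => i _; exact: PZ.
have AD x y : A x -> A y -> A (x + y) by move=> Ax Ay; rewrite -[x]scale1r; apply: Ac.
have AZ c x : A x -> A (c *: x) by move=> Ax; rewrite -[_ *: _]addr0; apply: Ac.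
have AB x y : A x -> A y -> A (x - y).
  by move=> Ax Ay; apply: AD => //; rewrite -scaleN1r; apply: AZ.
have Asum N (d : 'I_N -> k) (v : 'I_N -> H) : (forall i, A (v i)) ->
    A (\sum_(i < N) d i *: v i).
  by move=> Av; apply: (big_ind A) => // i _; apply: AZ.
pose C (M : 'M[k]_(m, n)) := exists a, A a /\
  forall j : 'I_m, Psi j a = \sum_(i < n) M j i *: ys i.
have [s [Cs Cspan]] : exists s : seq 'M[k]_(m, n), (forall x, x \in s -> C x) /\
    (forall x, C x -> x \in <<s>>%VS).
  apply: span_fin.
    exists 0; split => // j; rewrite P0 big1 // => i _; by rewrite mxE scale0r.
  move=> c u v [a [Aa ha]] [b [Ab hb]]; exists (c *: a + b); split; first exact: Ac.
  move=> j; rewrite Pl ha hb scaler_sumr -big_split; apply: eq_bigr => i _ /=.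
  by rewrite !mxE scalerDl scalerA.
have [w wP] : {w : 'M[k]_(m, n) -> H & forall M, C M -> A (w M) /\
    forall j : 'I_m, Psi j (w M) = \sum_(i < n) M j i *: ys i}.
  apply: (@choice _ _ (fun M a => C M -> A a /\
    forall j : 'I_m, Psi j a = \sum_(i < n) M j i *: ys i)) => M; have [[a ha]|nc] := pselect (C M); first by exists a.
  by exists 0.
exists (map w s); split.
  by move=> x /mapP [M Ms ->]; have [] := wP M (Cs M Ms).
move=> a Aa.
have [cc ccP] : exists cc : 'I_m -> nat -> k,
    forall j : 'I_m, Psi j a = \sum_(i < n) cc j i *: ys i.
  apply: (@fin_all_exists 'I_m (fun _ => nat -> k)
    (fun (j : 'I_m) (c : nat -> k) => Psi j a = \sum_(i < n) c i *: ys i)) => j.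
  by apply: Pspan.
pose M : 'M[k]_(m, n) := \matrix_(j, i) cc j (nat_of_ord i).
have CM : C M by exists a; split => // j; rewrite ccP; apply: eq_bigr => i _; rewrite mxE.
have [d dE] := coord_ex (Cspan M CM).
rewrite size_map; exists d.
have nthw : forall i : 'I_(size s), (map w s)`_i = w s`_i.
  by move=> i; rewrite (nth_map 0).
have Aw : forall i : 'I_(size s), A (w s`_i).
  by move=> i; have [] := wP _ (Cs _ (mem_nth 0 (ltn_ord i))).
apply/eqP; rewrite -subr_eq0; apply/eqP; apply: Pinj.
  apply: AB => //; apply: Asum => i; rewrite nthw; exact: Aw.
move=> j jlt; pose jo := Ordinal jlt.
rewrite PD -scaleN1r PZ Psum (ccP jo).
have E2 : \sum_(i < size s) d i *: Psi j (map w s)`_i =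
    \sum_(l < n) (\sum_(i < size s) d i * s`_i jo l) *: ys l.
  rewrite (eq_bigr (fun i => d i *: \sum_(l < n) s`_i jo l *: ys l)); last first.
    by move=> i _; rewrite nthw (proj2 (wP _ (Cs _ (mem_nth 0 (ltn_ord i)))) jo).
  under eq_bigr do rewrite scaler_sumr.
  rewrite (exchange_big_dep xpredT) //=; apply: eq_bigr => l _.
  by rewrite scaler_suml; apply: eq_bigr => i _; rewrite scalerA.
rewrite E2.
have Ec : forall l : 'I_n, \sum_(i < size s) d i * s`_i jo l = cc jo l.
  move=> l; have -> : cc jo l = M jo l by rewrite mxE.
  by rewrite dE summxE; apply: eq_bigr => i _; rewrite mxE.
under [X in _ + _ *: X]eq_bigr do rewrite Ec.
by rewrite scaleN1r addrN.
Qed.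

Section Comb.
Variables (k : fieldType) (H : algType k).
Notation lin := (@lin_fun k H).
Notation lmap := (@lin_map k H).

Lemma lmap0 F : lmap F -> F 0 = 0.
Proof.
move=> lf; have := lf 1 0 0; rewrite !scale1r addr0 => /esym/eqP.
by rewrite -subr_eq0 addrK => /eqP.
Qed.
Lemma lmapD F x y : lmap F -> F (x + y) = F x + F y.
Proof. by move=> lf; have := lf 1 x y; rewrite !scale1r. Qed.
Lemma lmapZ F c x : lmap F -> F (c *: x) = c *: F x.
Proof. by move=> lf; have := lf c x 0; rewrite !addr0 lmap0 // addr0. Qed.
Lemma lmap_sum F I (r : seq I) (P : pred I) (G : I -> H) : lmap F ->
  F (\sum_(i <- r | P i) G i) = \sum_(i <- r | P i) F (G i).
Proof. by move=> lf; apply: (big_morph F (fun x y => lmapD x y lf) (lmap0 lf)). Qed.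

Lemma lin_sumF I (r : seq I) (F : I -> H -> k) : (forall i, lin (F i)) ->
  lin (fun x => \sum_(i <- r) F i x).
Proof.
move=> lF c x y; rewrite mulr_sumr -big_split; apply: eq_bigr => i _; exact: lF.
Qed.
Lemma lin_mulr f c : lin f -> lin (fun x => f x * c).
Proof. by move=> lf a x y; rewrite lf mulrDl mulrA. Qed.
Lemma lin_mull f c : lin f -> lin (fun x => c * f x).
Proof. by move=> lf a x y; rewrite lf mulrDr !mulrA [c * a]mulrC. Qed.
Lemma lin_comp f g : lin f -> lmap g -> lin (fun x => f (g x)).
Proof. by move=> lf lg a x y; rewrite lg lf. Qed.
Lemma lmap_comp f g : lmap f -> lmap g -> lmap (fun x => f (g x)).
Proof. by move=> lf lg a x y; rewrite lg lf. Qed.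
Lemma lmap_inv f g : lmap f -> cancel f g -> cancel g f -> lmap g.
Proof.
by move=> lf fg gf a x y; apply: (can_inj fg); rewrite lf !gf.
Qed.
End Comb.

Section Core.
Variables (k : fieldType) (H : algType k).
Notation lin := (@lin_fun k H).
Notation lmap := (@lin_map k H).
Variables (cop : H -> seq (H * H)) (eps : H -> k) (S Si : H -> H)
  (mul : H -> H -> H).
Hypothesis cop_lin : forall (c : k) (x y : H),
    teq2 (cop (c *: x + y)) ([seq (c *: p.1, p.2) | p <- cop x] ++ cop y).
Hypothesis cop_mul : forall x y : H,
    teq2 (cop (mul x y)) [seq (mul p.1 q.1, mul p.2 q.2) | p <- cop x, q <- cop y].
Hypothesis coassoc : forall x : H,
    teq3 [seq (q.1, q.2, p.2) | p <- cop x, q <- cop p.1]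
         [seq (p.1, q.1, q.2) | p <- cop x, q <- cop p.2].
Hypothesis counit_l : forall x : H, \sum_(p <- cop x) eps p.1 *: p.2 = x.
Hypothesis counit_r : forall x : H, \sum_(p <- cop x) eps p.2 *: p.1 = x.
Hypothesis antipode_l : forall x : H, \sum_(p <- cop x) mul (S p.1) p.2 = eps x *: 1.
Hypothesis antipode_r : forall x : H, \sum_(p <- cop x) mul p.1 (S p.2) = eps x *: 1.
Hypothesis S_lin : lmap S.
Hypothesis SK : cancel S Si.
Hypothesis SiK : cancel Si S.
Hypothesis mull : forall z, lmap (mul ^~ z).
Hypothesis mulr : forall z, lmap (mul z).
Hypothesis mulA : forall x y z, mul x (mul y z) = mul (mul x y) z.
Hypothesis mul1x : forall x, mul 1 x = x.
Hypothesis mulx1 : forall x, mul x 1 = x.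

Lemma Si_lin : lmap Si. Proof. exact: lmap_inv S_lin SK SiK. Qed.

Lemma ev_copL B c x y : bil B ->
  \sum_(p <- cop (c *: x + y)) B p.1 p.2 =
  c * \sum_(p <- cop x) B p.1 p.2 + \sum_(p <- cop y) B p.1 p.2.
Proof.
move=> bB; rewrite (BIL2 (cop_lin c x y) bB) big_cat big_map /= mulr_sumr.
by congr (_ + _); apply: eq_bigr => p _; case: bB => B1 _; exact: (linZ c p.1 (B1 p.2)).
Qed.

Lemma ev_cop0 B : bil B -> \sum_(p <- cop 0) B p.1 p.2 = 0.
Proof.
move=> bB; have := ev_copL 1 0 0 bB; rewrite scale1r addr0 mul1r => /esym/eqP.
by rewrite -subr_eq0 addrK => /eqP.
Qed.

Lemma ev_copZ B c x : bil B ->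
  \sum_(p <- cop (c *: x)) B p.1 p.2 = c * \sum_(p <- cop x) B p.1 p.2.
Proof. by move=> bB; rewrite -[c *: x]addr0 ev_copL // ev_cop0 // addr0. Qed.

Lemma lin_ev_cop B : bil B -> lin (fun z => \sum_(p <- cop z) B p.1 p.2).
Proof. by move=> bB c x y; apply: ev_copL. Qed.

Lemma ev_copM B x y : bil B ->
  \sum_(p <- cop (mul x y)) B p.1 p.2 =
  \sum_(p <- cop x) \sum_(q <- cop y) B (mul p.1 q.1) (mul p.2 q.2).
Proof. by move=> bB; rewrite (BIL2 (cop_mul x y) bB) big_allpairs_dep. Qed.

Lemma ev_coasso T x : tril T ->
  \sum_(p <- cop x) \sum_(q <- cop p.1) T q.1 q.2 p.2 =
  \sum_(p <- cop x) \sum_(q <- cop p.2) T p.1 q.1 q.2.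
Proof.
move=> tT; have := BIL3 (coassoc x) tT.
by rewrite !big_allpairs_dep.
Qed.


Lemma mullZ c x z : mul (c *: x) z = c *: mul x z.
Proof. exact: (lmapZ c x (mull z)). Qed.
Lemma mulrZ c x z : mul z (c *: x) = c *: mul z x.
Proof. exact: (lmapZ c x (mulr z)). Qed.
Lemma mull_sum I (r : seq I) (G : I -> H) z :
  mul (\sum_(i <- r) G i) z = \sum_(i <- r) mul (G i) z.
Proof. exact: (lmap_sum r xpredT G (mull z)). Qed.
Lemma mulr_sum I (r : seq I) (G : I -> H) z :
  mul z (\sum_(i <- r) G i) = \sum_(i <- r) mul z (G i).
Proof. exact: (lmap_sum r xpredT G (mulr z)). Qed.

Lemma antiL x r phi : lin phi ->
  \sum_(q <- cop x) phi (mul (S q.1) (mul q.2 r)) = eps x * phi r.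
Proof.
move=> lphi; rewrite -[in RHS](mul1x r) -linZ // -mullZ -antipode_l mull_sum lin_sum //.
by apply: eq_bigr => q _; rewrite mulA.
Qed.

Lemma antiR x u phi : lin phi ->
  \sum_(q <- cop x) phi (mul (mul u q.1) (S q.2)) = eps x * phi u.
Proof.
move=> lphi; rewrite -[in RHS](mulx1 u) -linZ // -mulrZ -antipode_r mulr_sum lin_sum //.
by apply: eq_bigr => q _; rewrite mulA.
Qed.

Lemma antiL2 x r : \sum_(q <- cop x) mul (S q.1) (mul q.2 r) = eps x *: r.
Proof.
rewrite -[in RHS](mul1x r) -mullZ -antipode_l mull_sum.
by apply: eq_bigr => q _; rewrite mulA.
Qed.

Variables (A : H -> Prop) (mu : H -> k) (Lam : H).
Hypothesis LamA : forall a, A a -> mul a Lam = mu a *: Lam.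
Hypothesis Lam0 : Lam <> 0.

Lemma stepC a phi g : lin phi -> lin g ->
  \sum_(p <- cop a) \sum_(q <- cop p.2) \sum_(r <- cop Lam)
     phi (mul (S p.1) (mul q.1 r.1)) * g (mul q.2 r.2) =
  \sum_(r <- cop Lam) phi r.1 * g (mul a r.2).
Proof.
move=> lphi lg.
pose T := fun u v w => \sum_(r <- cop Lam) phi (mul (S u) (mul v r.1)) * g (mul w r.2).
have tT : tril T.
  split.
  - move=> v w; apply: lin_sumF => r; apply: lin_mulr.
    apply: (lin_comp lphi); apply: (lmap_comp (mull _)); exact: S_lin.
  - move=> u w; apply: lin_sumF => r; apply: lin_mulr.
    apply: (lin_comp lphi); apply: (lmap_comp (mulr _)); exact: (mull _).
  - move=> u v; apply: lin_sumF => r; apply: lin_mull.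
    apply: (lin_comp lg); exact: (mull _).
transitivity (\sum_(p <- cop a) \sum_(q <- cop p.1) T q.1 q.2 p.2).
  exact: (esym (ev_coasso a tT)).
rewrite /T.
transitivity (\sum_(p <- cop a) \sum_(r <- cop Lam) (eps p.1 * phi r.1) * g (mul p.2 r.2)).
  apply: eq_bigr => p _; rewrite (exchange_big_dep xpredT) //=.
  by apply: eq_bigr => r _; rewrite -mulr_suml antiL.
rewrite (exchange_big_dep xpredT) //=; apply: eq_bigr => r _.
rewrite -{2}(counit_l a) mull_sum lin_sum // mulr_sumr; apply: eq_bigr => p _.
by rewrite mullZ linZ // mulrA [eps _ * _]mulrC.
Qed.

Lemma I1 a sa phi : (forall p, p \in sa -> A p.2) -> teq2 (cop a) sa -> lin phi ->
  \sum_(r <- cop Lam) phi r.1 *: mul a r.2 =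
  \sum_(r <- cop Lam) (\sum_(p <- sa) mu p.2 * phi (mul (S p.1) r.1)) *: r.2.
Proof.
move=> sA ta lphi; apply: sep_eq => g lg.
rewrite !lin_sum //.
under eq_bigr do rewrite linZ //.
under [RHS]eq_bigr do rewrite linZ // mulr_suml.
rewrite [RHS](exchange_big_dep xpredT) //=.
rewrite -(stepC a lphi lg).
pose B1 := fun u z => \sum_(q <- cop z) \sum_(r <- cop Lam)
     phi (mul (S u) (mul q.1 r.1)) * g (mul q.2 r.2).
have bB1 : bil B1.
  rewrite /B1; split.
  - move=> z; apply: lin_sumF => q; apply: lin_sumF => r; apply: lin_mulr.
    apply: (lin_comp lphi); apply: (lmap_comp (mull _)); exact: S_lin.
  - move=> u; apply: (lin_ev_cop (B := fun v w => \sum_(r <- cop Lam)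
       phi (mul (S u) (mul v r.1)) * g (mul w r.2))); split.
    + move=> v; apply: lin_sumF => r; apply: lin_mulr.
      apply: (lin_comp lphi); apply: (lmap_comp (mulr _)); exact: (mull _).
    + move=> v; apply: lin_sumF => r; apply: lin_mull.
      apply: (lin_comp lg); exact: (mull _).
transitivity (\sum_(p <- sa) B1 p.1 p.2); first exact: (BIL2 ta bB1).
apply: eq_big_seq => p ps; rewrite /B1.
have bB2 : bil (fun u v => phi (mul (S p.1) u) * g v).
  split.
  - move=> v; apply: lin_mulr; apply: (lin_comp lphi); exact: (mulr _).
  - by move=> u; apply: lin_mull.
transitivity (\sum_(q <- cop (mul p.2 Lam)) phi (mul (S p.1) q.1) * g q.2).
  exact: (esym (ev_copM p.2 Lam bB2)).
rewrite LamA; last exact: sA.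
rewrite (ev_copZ _ _ bB2) mulr_sumr; apply: eq_bigr => r _.
by rewrite mulrA.
Qed.


Lemma Inj a sa : (forall p, p \in sa -> A p.2) -> teq2 (cop a) sa ->
  (forall phi, lin phi -> \sum_(r <- cop Lam) phi r.1 *: mul a r.2 = 0) -> a = 0.
Proof.
move=> sA ta H0.
have [g0 [lg0 g0L]] := sep Lam0.
have Z0 : forall f g, lin f -> lin g -> \sum_(p <- sa) \sum_(r <- cop Lam)
    mu p.2 * f (mul (S p.1) r.1) * g r.2 = 0.
  move=> f g lf lg; have E := congr1 g (I1 sA ta lf).
  rewrite H0 // (lin0 lg) lin_sum // in E.
  rewrite (exchange_big_dep xpredT) //= [RHS]E; apply: eq_bigr => r _.
  by rewrite linZ // mulr_suml.
have Sd : forall h, lin h -> \sum_(p <- sa) mu p.2 * h (S p.1) = 0.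
  move=> h lh.
  pose Z := [seq (mu p.2 *: mul (S p.1) r.1, r.2) | p <- sa, r <- cop Lam].
  have tZ : teq2 Z [::].
    move=> f g lf lg; rewrite big_nil big_allpairs_dep /= -[RHS](Z0 f g lf lg).
    by apply: eq_bigr => p _; apply: eq_bigr => r _ /=; rewrite linZ // mulrA.
  pose B := fun u v => \sum_(q <- cop v) h (mul u (S q.1)) * g0 q.2.
  have bB : bil B.
    rewrite /B; split.
    - move=> v; apply: lin_sumF => q; apply: lin_mulr; apply: (lin_comp lh).
      exact: (mull _).
    - move=> u; apply: (lin_ev_cop (B := fun v w => h (mul u (S v)) * g0 w)); split.
      + move=> w; apply: lin_mulr; apply: (lin_comp lh).
        apply: (lmap_comp (mulr _)); exact: S_lin.
      + by move=> v; apply: lin_mull.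
  have := BIL2 tZ bB; rewrite big_nil big_allpairs_dep /= => E; rewrite -[RHS]E.
  apply: eq_bigr => p _; symmetry.
  transitivity (mu p.2 * \sum_(r <- cop Lam) \sum_(q <- cop r.2)
      h (mul (mul (S p.1) r.1) (S q.1)) * g0 q.2).
    rewrite mulr_sumr; apply: eq_bigr => r _; rewrite /B mulr_sumr.
    by apply: eq_bigr => q _; rewrite mullZ linZ // mulrA.
  congr (_ * _).
  pose T := fun u v w => h (mul (mul (S p.1) u) (S v)) * g0 w.
  have tT : tril T.
    rewrite /T; split.
    - move=> v w; apply: lin_mulr; apply: (lin_comp lh).
      apply: (lmap_comp (mull _)); exact: (mulr _).
    - move=> u w; apply: lin_mulr; apply: (lin_comp lh).
      apply: (lmap_comp (mulr _)); exact: S_lin.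
    - by move=> u v; apply: lin_mull.
  transitivity (\sum_(r <- cop Lam) \sum_(q <- cop r.1) T q.1 q.2 r.2).
    exact: (esym (ev_coasso Lam tT)).
  rewrite /T.
  under eq_bigr do rewrite -mulr_suml antiR //.
  rewrite -[RHS]mulr1 -g0L -{2}(counit_l Lam) lin_sum // mulr_sumr.
  by apply: eq_bigr => r _; rewrite linZ // mulrCA mulrA.
have Se : forall h g, lin h -> lin g -> h a * g Lam =
    \sum_(p <- sa) mu p.2 * (\sum_(q <- cop p.1) h q.1 * g (mul (S q.2) Lam)).
  move=> h g lh lg.
  transitivity (\sum_(p <- sa) \sum_(q <- cop p.1) h q.1 * g (mul (S q.2) (mul p.2 Lam))); last first.
    apply: eq_big_seq => p ps; rewrite LamA; last exact: sA.
    rewrite mulr_sumr; apply: eq_bigr => q _.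
    by rewrite mulrZ linZ // mulrCA.
  pose B2 := fun u z => \sum_(q <- cop u) h q.1 * g (mul (S q.2) (mul z Lam)).
  have bB2 : bil B2.
    rewrite /B2; split.
    - move=> z; apply: (lin_ev_cop (B := fun v w => h v * g (mul (S w) (mul z Lam)))).
      split.
      + by move=> w; apply: lin_mulr.
      + move=> v; apply: lin_mull; apply: (lin_comp lg).
        apply: (lmap_comp (mull _)); exact: S_lin.
    - move=> u; apply: lin_sumF => q; apply: lin_mull; apply: (lin_comp lg).
      apply: (lmap_comp (mulr _)); exact: (mull _).
  transitivity (\sum_(p <- cop a) B2 p.1 p.2); last exact: (BIL2 ta bB2).
  pose T := fun u v w => h u * g (mul (S v) (mul w Lam)).
  have tT : tril T.
    rewrite /T; split.
    - by move=> v w; apply: lin_mulr.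
    - move=> u w; apply: lin_mull; apply: (lin_comp lg).
      apply: (lmap_comp (mull _)); exact: S_lin.
    - move=> u v; apply: lin_mull; apply: (lin_comp lg).
      apply: (lmap_comp (mulr _)); exact: (mull _).
  transitivity (\sum_(p <- cop a) \sum_(q <- cop p.2) T p.1 q.1 q.2); last first.
    exact: (esym (ev_coasso a tT)).
  rewrite /T.
  under eq_bigr do rewrite -mulr_sumr -lin_sum // antiL2 linZ //.
  rewrite -{1}(counit_r a) lin_sum // mulr_suml; apply: eq_bigr => p _.
  by rewrite linZ // mulrCA mulrA.
apply: sep_eq => h lh; rewrite (lin0 lh).
pose l := fun u => \sum_(q <- cop u) h q.1 * g0 (mul (S q.2) Lam).
have ll : lin l.
  apply: (lin_ev_cop (B := fun v w => h v * g0 (mul (S w) Lam))); split.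
  - by move=> w; apply: lin_mulr.
  - move=> v; apply: lin_mull; apply: (lin_comp lg0).
    apply: (lmap_comp (mull _)); exact: S_lin.
rewrite -[h a]mulr1 -g0L (Se h g0 lh lg0).
rewrite -[RHS](Sd (fun u => l (Si u))); last exact: (lin_comp ll Si_lin).
by apply: eq_bigr => p _; rewrite SK.
Qed.


Hypothesis coid : forall a, A a ->
  exists s, (forall p, p \in s -> A p.2) /\ teq2 (cop a) s.
Hypothesis A0 : A 0.
Hypothesis Ac : forall c x y, A x -> A y -> A (c *: x + y).

Lemma core_fin : fin_dim A.
Proof.
have [n [e [phi [lphi _ span]]]] := FDB (map fst (cop Lam)).
apply: (@FIN _ _ A n (size (cop Lam)) (fun i => (nth (0, 0) (cop Lam) i).2)
  (fun j a => \sum_(r <- cop Lam) phi j r.1 *: mul a r.2)) => //.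
- move=> j c x y; rewrite scaler_sumr -big_split; apply: eq_bigr => r _ /=.
  by rewrite mull scalerDr !scalerA mulrC.
- move=> a Aa j _; have [sa [sA ta]] := coid Aa.
  rewrite (I1 sA ta (lphi j)).
  exists (fun i => \sum_(p <- sa) mu p.2 * phi j (mul (S p.1) (nth (0, 0) (cop Lam) i).1)).
  by rewrite (big_nth (0, 0)) big_mkord.
- move=> a Aa Z; have [sa [sA ta]] := coid Aa.
  apply: (Inj sA ta) => f lf.
  transitivity (\sum_(j < n) f (e j) *: \sum_(r <- cop Lam) phi j r.1 *: mul a r.2).
    under [RHS]eq_bigr do rewrite scaler_sumr.
    rewrite [RHS](exchange_big_dep xpredT) //= big_seq_cond [RHS]big_seq_cond.
    apply: eq_bigr => r /andP[rs _].
    rewrite {1}(span r.1 (map_f fst rs)) lin_sum // scaler_suml.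
    by apply: eq_bigr => j _; rewrite linZ // mulrC scalerA.
  by apply: big1 => j _; rewrite Z // scaler0.
Qed.

End Core.

Section Hop.
Variables (k : fieldType) (H : algType k) (HS : hopf_struct H).
Notation lin := (@lin_fun k H).
Notation lmap := (@lin_map k H).
Local Notation cop := (cop HS).
Local Notation S := (antipode HS).
Local Notation eps := (eps HS).

Lemma lmapMl z : lmap (fun w : H => w * z).
Proof. by move=> c x y; rewrite mulrDl scalerAl. Qed.
Lemma lmapMr z : lmap (fun w : H => z * w).
Proof. by move=> c x y; rewrite mulrDr scalerAr. Qed.

Lemma evM B x y : bil B -> \sum_(p <- cop (x * y)) B p.1 p.2 =
  \sum_(p <- cop x) \sum_(q <- cop y) B (p.1 * q.1) (p.2 * q.2).
Proof. exact: (ev_copM (cop_mul HS)). Qed.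

Lemma evA T x : tril T ->
  \sum_(p <- cop x) \sum_(q <- cop p.1) T q.1 q.2 p.2 =
  \sum_(p <- cop x) \sum_(q <- cop p.2) T p.1 q.1 q.2.
Proof. exact: (ev_coasso (coassoc HS)). Qed.

Lemma S1 : S 1 = 1.
Proof.
apply: sep_eq => h lh.
have bB : bil (fun u v => h (S u * v)).
  split.
  - move=> v; apply: (lin_comp lh); apply: (lmap_comp (lmapMl _)); exact: antipode_lin.
  - move=> u; apply: (lin_comp lh); exact: lmapMr.
have := BIL2 (cop_one HS) bB; rewrite big_cons big_nil addr0 mulr1 => <-.
by rewrite -lin_sum // antipode_l eps_one scale1r.
Qed.

Lemma eps2 a b : (eps a * eps b) *: (1 : H) =
  \sum_(u <- cop a) \sum_(v <- cop b) u.1 * (v.1 * S v.2) * S u.2.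
Proof.
transitivity (\sum_(u <- cop a) u.1 * (eps b *: 1) * S u.2); last first.
  by apply: eq_bigr => u _; rewrite -antipode_r mulr_sumr mulr_suml.
under eq_bigr do rewrite -scalerAr -scalerAl mulr1.
by rewrite -scaler_sumr antipode_r scalerA mulrC.
Qed.

Lemma antiM x y : S (x * y) = S y * S x.
Proof.
apply: sep_eq => h lh.
have lS := antipode_lin HS.
transitivity (\sum_(p <- cop x) \sum_(q <- cop y)
    eps p.2 * eps q.2 * h (S (p.1 * q.1))).
  rewrite -{1}(counit_r HS (x * y)) (lmap_sum _ _ _ lS) lin_sum //.
  have bB : bil (fun u v => eps v * h (S u)).
    split.
    - by move=> v; apply: lin_mull; apply: (lin_comp lh).
    - move=> u; apply: lin_mulr; exact: eps_lin.
  transitivity (\sum_(p <- cop (x * y)) eps p.2 * h (S p.1)).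
    by apply: eq_bigr => p _; rewrite lmapZ // linZ.
  rewrite (evM _ _ bB); apply: eq_bigr => p _; apply: eq_bigr => q _.
  by rewrite eps_mul.
transitivity (\sum_(p <- cop x) \sum_(q <- cop y) \sum_(u <- cop p.2) \sum_(v <- cop q.2)
    h (S (p.1 * q.1) * (u.1 * (v.1 * S v.2) * S u.2))).
  apply: eq_bigr => p _; apply: eq_bigr => q _.
  rewrite -linZ //.
  have -> : (eps p.2 * eps q.2) *: S (p.1 * q.1) =
      S (p.1 * q.1) * ((eps p.2 * eps q.2) *: 1) by rewrite -scalerAr mulr1.
  rewrite eps2 mulr_sumr lin_sum //; apply: eq_bigr => u _.
  by rewrite mulr_sumr lin_sum.
transitivity (\sum_(p <- cop x) \sum_(u <- cop p.2) \sum_(q <- cop y) \sum_(v <- cop q.2)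
    h (S (p.1 * q.1) * (u.1 * (v.1 * S v.2) * S u.2))).
  by apply: eq_bigr => p _; rewrite (exchange_big_dep xpredT).
pose T := fun a b c => \sum_(q <- cop y) \sum_(v <- cop q.2)
    h (S (a * q.1) * (b * (v.1 * S v.2) * S c)).
have tT : tril T.
  rewrite /T; split.
  - move=> b c; apply: lin_sumF => q; apply: lin_sumF => v; apply: (lin_comp lh).
    apply: (lmap_comp (lmapMl _)); apply: (lmap_comp lS); exact: lmapMl.
  - move=> a c; apply: lin_sumF => q; apply: lin_sumF => v; apply: (lin_comp lh).
    apply: (lmap_comp (lmapMr _)); apply: (lmap_comp (lmapMl _)); exact: lmapMl.
  - move=> a b; apply: lin_sumF => q; apply: lin_sumF => v; apply: (lin_comp lh).
    apply: (lmap_comp (lmapMr _)); apply: (lmap_comp (lmapMr _)); exact: lS.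
transitivity (\sum_(p <- cop x) \sum_(u <- cop p.1) T u.1 u.2 p.2).
  exact: (esym (evA x tT)).
rewrite /T.
transitivity (\sum_(p <- cop x) \sum_(u <- cop p.1) \sum_(q <- cop y) \sum_(v <- cop q.1)
    h (S (u.1 * v.1) * (u.2 * (v.2 * S q.2) * S p.2))).
  apply: eq_bigr => p _; apply: eq_bigr => u _.
  pose T' := fun a b c => h (S (u.1 * a) * (u.2 * (b * S c) * S p.2)).
  have tT' : tril T'.
    rewrite /T'; split.
    - move=> b c; apply: (lin_comp lh).
      apply: (lmap_comp (lmapMl _)); apply: (lmap_comp lS); exact: lmapMr.
    - move=> a c; apply: (lin_comp lh).
      apply: (lmap_comp (lmapMr _)); apply: (lmap_comp (lmapMl _)).
      apply: (lmap_comp (lmapMr _)); exact: lmapMl.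
    - move=> a b; apply: (lin_comp lh).
      apply: (lmap_comp (lmapMr _)); apply: (lmap_comp (lmapMl _)).
      apply: (lmap_comp (lmapMr _)); apply: (lmap_comp (lmapMr _)); exact: lS.
  exact: (esym (evA y tT')).
transitivity (\sum_(p <- cop x) \sum_(q <- cop y) \sum_(u <- cop p.1) \sum_(v <- cop q.1)
    h (S (u.1 * v.1) * ((u.2 * v.2) * (S q.2 * S p.2)))).
  apply: eq_bigr => p _; rewrite (exchange_big_dep xpredT) //=.
  apply: eq_bigr => q _; apply: eq_bigr => u _; apply: eq_bigr => v _.
  by rewrite !mulrA.
transitivity (\sum_(p <- cop x) \sum_(q <- cop y) eps p.1 * eps q.1 * h (S q.2 * S p.2)).
  apply: eq_bigr => p _; apply: eq_bigr => q _.
  have bB : bil (fun a b => h (S a * (b * (S q.2 * S p.2)))).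
    split.
    - move=> b; apply: (lin_comp lh); apply: (lmap_comp (lmapMl _)); exact: lS.
    - move=> a; apply: (lin_comp lh); apply: (lmap_comp (lmapMr _)); exact: lmapMl.
  rewrite -(evM _ _ bB) -lin_sum //.
  under eq_bigr do rewrite mulrA.
  by rewrite -mulr_suml antipode_l eps_mul -scalerAl mul1r linZ.
rewrite -{2}(counit_l HS x) -{2}(counit_l HS y) !(lmap_sum _ _ _ lS).
rewrite mulr_sumr lin_sum //; apply: eq_bigr => p _.
rewrite mulr_suml lin_sum //; apply: eq_bigr => q _.
by rewrite !(lmapZ _ _ lS) -scalerAl -scalerAr linZ // linZ // mulrA [eps q.1 * _]mulrC.
Qed.

End Hop.

Theorem mainTheorem8 (k : fieldType) (H : algType k) (HS : hopf_struct H)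
  (A : H -> Prop) (mu : H -> k) :
  left_coideal_subalgebra HS A ->
  mult_functional A mu -> nonzero_on A mu ->
  pos_dim (L_mu A mu) \/ pos_dim (R_mu A mu) ->
  fin_dim A.
Proof.
move=> [A0 A1 Ac Am coid] _ _ Hd.
have [Si [SK SiK]] := antipode_inv HS.
case: Hd => [[Lam [[LA Lmu] L0]] | [Lam [[LA Rmu] L0]]].
  exact: (@core_fin k H (cop HS) (eps HS) (antipode HS) Si *%R
    (cop_lin HS) (cop_mul HS) (coassoc HS) (counit_l HS) (counit_r HS)
    (antipode_l HS) (antipode_r HS) (antipode_lin HS) SK SiK
    (@lmapMl k H) (@lmapMr k H) (@mulrA H) (@mul1r H) (@mulr1 H)
    A mu Lam Lmu L0 coid A0 Ac).
have cm : forall x y : H, teq2 (cop HS (y * x))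
    [seq (q.1 * p.1, q.2 * p.2) | p <- cop HS x, q <- cop HS y].
  move=> x y f g lf lg; rewrite (cop_mul HS y x lf lg) !big_allpairs_dep /=.
  exact: exchange_big.
have Sinj : injective (antipode HS) by apply: (can_inj SK).
have lS := antipode_lin HS.
have al : forall x, \sum_(p <- cop HS x) p.2 * Si p.1 = eps HS x *: 1.
  move=> x; apply: Sinj; rewrite (lmap_sum _ _ _ lS) (lmapZ _ _ lS) S1.
  rewrite -(antipode_r HS x); apply: eq_bigr => p _.
  by rewrite antiM SiK.
have ar : forall x, \sum_(p <- cop HS x) Si p.2 * p.1 = eps HS x *: 1.
  move=> x; apply: Sinj; rewrite (lmap_sum _ _ _ lS) (lmapZ _ _ lS) S1.
  rewrite -(antipode_l HS x); apply: eq_bigr => p _.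
  by rewrite antiM SiK.
exact: (@core_fin k H (cop HS) (eps HS) Si (antipode HS) (fun x y => y * x)
    (cop_lin HS) cm (coassoc HS) (counit_l HS) (counit_r HS)
    al ar (Si_lin lS SK SiK) SiK SK
    (@lmapMr k H) (@lmapMl k H) (fun x y z => esym (mulrA z y x))
    (@mulr1 H) (@mul1r H)
    A mu Lam Rmu L0 coid A0 Ac).
Qed.
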